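(* Let $n,i,j$ be positive integers and $s=(2^{2n}-1)/3$. Let $$f(x)=(x^{2^i}+x^{2^j})(1+x^s+x^{2s})+x^{2^j}\in\mathbb{F}_{2^{2n}}[x].$$ For a positive integer $k$ let $\widetilde{2^k}$ denote a positive integer inverse of $2^k$ modulo $s$ (i.e. $2^k\widetilde{2^k}\equiv1\pmod s$), and let $u$ be the integer with $0\le u<3$ and $u\equiv(-1)^j(1-2^j\widetilde{2^j})/s\pmod 3$. Then the inverse of $f$ over $\mathbb{F}_{2^{2n}}$ is $$f^{-1}(x)=(x^{\widetilde{2^i}}+x^{\widetilde{2^j}})(1+x^s+x^{2s})+x^{\widetilde{2^j}+us},$$ i.e. $f^{-1}(f(c))=c$ for all $c\in\mathbb{F}_{2^{2n}}$.
   Context: A polynomial $g$ is the inverse of $f$ over $\mathbb{F}_q$ if $g(f(c))=c$ for all $c\in\mathbb{F}_q$. (The polynomial $f$ here is a permutation polynomial of $\mathbb{F}_{2^{2n}}$.) *)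

(* Defs.v *)
From mathcomp Require Import all_boot all_order all_algebra all_field.
Set Implicit Arguments. Unset Strict Implicit. Unset Printing Implicit Defensive.
Import GRing.Theory Num.Theory.
Local Open Scope ring_scope.

Definition s_of (n : nat) : nat := ((2 ^ (2 * n)).-1 %/ 3)%N.

Definition f_fun (F : finFieldType) (n i j : nat) (x : F) : F :=
  (x ^+ (2 ^ i) + x ^+ (2 ^ j)) * (1 + x ^+ s_of n + x ^+ (2 * s_of n))
  + x ^+ (2 ^ j).

(* u in {0,1,2} with u = (-1)^j (1 - 2^j * tj) / s  (mod 3); the division
   is exact when 2^j * tj = 1 (mod s). *)
Definition u_of (n j tj : nat) : nat :=
  absz (modz ((-1) ^+ j * divz (1 - (2 ^ j * tj)%N%:Z) (s_of n)%:Z) 3).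

Definition finv_fun (F : finFieldType) (n ti tj u : nat) (x : F) : F :=
  (x ^+ ti + x ^+ tj) * (1 + x ^+ s_of n + x ^+ (2 * s_of n))
  + x ^+ (tj + u * s_of n).

(* Main.v *)
Require Import Defs.
From mathcomp Require Import all_boot all_order all_algebra all_field.
From mathcomp Require Import ring lra.
Import GRing.Theory Num.Theory.
Local Open Scope ring_scope.

Lemma pow2_mod3 (j : nat) : exists a : int, (2 ^ j)%N%:Z = (-1) ^+ j + 3 * a.
Proof.
elim: j => [|j [a IH]]; first by exists 0; rewrite expr0 mulr0 addr0.
exists ((-1) ^+ j + 2 * a); rewrite expnS PoszM IH exprS; ring.
Qed.

Lemma arith (S j tj : nat) : (0 < S)%N -> (0 < tj)%N -> (2 ^ j * tj = 1 %[mod S])%N ->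
  exists t : nat, (2 ^ j * (tj + absz (modz ((-1) ^+ j * divz (1 - (2 ^ j * tj)%N%:Z) S%:Z) 3) * S) = 1 + t * (3 * S))%N.
Proof.
move=> S0 tj0 hmod.
have N1 : (1 <= 2 ^ j * tj)%N by rewrite muln_gt0 expn_gt0.
have : (S %| 2 ^ j * tj - 1)%N by rewrite -eqn_mod_dvd // hmod.
case/dvdnP=> m hm.
have hN : (2 ^ j * tj)%N%:Z = m%:Z * S%:Z + 1.
  by rewrite -PoszM -hm -[1]/(1%N%:Z) -PoszD subnK.
have hD : divz (1 - (2 ^ j * tj)%N%:Z) S%:Z = - m%:Z.
  by rewrite hN opprD addrCA subrr addr0 -mulNr mulzK // eqz_nat -lt0n.
rewrite hD.
set X := (-1) ^+ j * - m%:Z.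
have hX := divz_eq X 3.
have hu : (absz (modz X 3))%:Z = modz X 3 by rewrite abszE ger0_norm // modz_ge0.
set u := absz (modz X 3) in hu *.
have [a ha] := pow2_mod3 j.
have sg : ((-1) ^+ j * (-1) ^+ j :> int) = 1 by rewrite -exprMn mulrNN mulr1 expr1n.
set T := a * u%:Z - (-1) ^+ j * divz X 3.
have hE : (2 ^ j * (tj + u * S))%N%:Z = 1 + T * (3 * S%:Z).
  rewrite mulnDr PoszD hN !PoszM ha.
  have hXu : X = divz X 3 * 3 + u%:Z by rewrite hu.
  rewrite /T; set k := (X %/ 3)%Z; set e := (-1) ^+ j.
  have hU : (u%:Z) = e * (- m%:Z) - k * 3.
    have hX2 := hX; rewrite -hu in hX2; rewrite -/X [in RHS]hX2; ring.
  rewrite hU; apply/eqP; rewrite -subr_eq0; apply/eqP.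
  transitivity ((1 - e * e) * m%:Z * S%:Z); first ring.
  by rewrite sg subrr !mul0r.
have T0 : 0 <= T.
  have h1 : (1 <= (2 ^ j * (tj + u * S))%N%:Z) by rewrite lez_nat mulnDr (leq_trans N1) // leq_addr.
  have h2 : (0 < S%:Z) by rewrite ltz_nat.
  rewrite hE in h1; nra.
exists (absz T); apply/eqP; rewrite -eqz_nat hE PoszD PoszM abszE ger0_norm //.
Qed.

Lemma pow2mod3 (j : nat) : (2 ^ j %% 3 = if odd j then 2 else 1)%N.
Proof.
elim: j => [//|j IH]; rewrite expnS -modnMmr IH /=; by case: (odd j).
Qed.

Section F.
Context {F : finFieldType}.
Hypothesis ch : 2%N \in [pchar F].

Lemma z0 (k : nat) : (0 < k)%N -> (0 : F) ^+ k = 0.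
Proof. by case: k => // k _; rewrite exprS mul0r. Qed.

Lemma e_one (S : nat) (x : F) : x ^+ S = 1 -> 1 + x ^+ S + x ^+ (2 * S) = 1.
Proof. by move=> h; rewrite mulnC exprM h expr1n (addrr_pchar2 ch) add0r. Qed.

Lemma e_zero (S : nat) (x : F) : x ^+ (3 * S) = 1 -> x ^+ S != 1 -> 1 + x ^+ S + x ^+ (2 * S) = 0.
Proof.
move=> h3 h1; rewrite mulnC exprM; rewrite mulnC exprM in h3.
set w := x ^+ S in h1 h3 *.
have : (w - 1) * (1 + w + w ^+ 2) = 0.
  have -> : (w - 1) * (1 + w + w ^+ 2) = w ^+ 3 - 1 by ring.
  by rewrite h3 subrr.
move/eqP; rewrite mulf_eq0 subr_eq0 (negbTE h1) /=; exact: eqP.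
Qed.

Lemma w_pow (w : F) (j : nat) : w ^+ 3 = 1 -> w != 1 -> w ^+ (2 ^ j) != 1.
Proof.
move=> h3 h1; apply/negP => /eqP h.
have := expr_mod (2 ^ j) h3; rewrite pow2mod3 h; case: (odd j).
  move=> h2; move/eqP: h1; apply; by rewrite -h3 exprSr h2 mul1r.
by rewrite expr1 => h2; rewrite h2 eqxx in h1.
Qed.
End F.

Theorem corollary4p4 (F : finFieldType) (n i j ti tj : nat)
  (hF : #|F| = (2 ^ (2 * n))%N)
  (hn : (0 < n)%N) (hi : (0 < i)%N) (hj : (0 < j)%N)
  (hti : (0 < ti)%N) (htj : (0 < tj)%N)
  (hti_inv : (2 ^ i * ti = 1 %[mod s_of n])%N)
  (htj_inv : (2 ^ j * tj = 1 %[mod s_of n])%N) :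
  forall c : F, finv_fun n ti tj (u_of n j tj) (f_fun n i j c) = c.
Proof.
move=> c.
have h4 : (2 ^ (2 * n) = 4 ^ n)%N by rewrite expnM.
have h41 : (1 <= 4 ^ n)%N by rewrite expn_gt0.
have hmod3 : (4 ^ n = 1 %[mod 3])%N by rewrite -modnXm /= exp1n.
have hS3 : (3 * s_of n = (2 ^ (2 * n)).-1)%N.
  by rewrite /s_of mulnC divnK // h4 -subn1 -eqn_mod_dvd // hmod3.
have S0 : (0 < s_of n)%N.
  have h44 : (2 ^ 2 <= 2 ^ (2 * n))%N by rewrite leq_pexp2l // leq_pmulr.
  rewrite lt0n; apply/eqP => Sz; move: hS3; rewrite Sz.
  by case: (2 ^ (2 * n))%N h44 => [|[|k]].
set S := s_of n in hti_inv htj_inv hS3 S0 *.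
have hq : #|F| = (3 * S).+1 by rewrite hS3 hF prednK // h4.
have ch : (2%N \in [pchar F]) by apply: (card_finPcharP hF).
have hx : forall x : F, x != 0 -> x ^+ (3 * S) = 1.
  move=> x x0; apply: (mulfI x0); by rewrite mulr1 -exprS -hq expf_card.
have hpos : forall k, (0 < k)%N -> (0 : F) ^+ k = 0 by exact: z0.
have S20 : (0 < 2 * S)%N by rewrite muln_gt0.
have [->|c0] := eqVneq c 0.
  have f0 : f_fun n i j (0 : F) = 0.
    by rewrite /f_fun !hpos ?expn_gt0 // ?addr0 ?mul0r ?addr0.
  have S0p : (0 < s_of n)%N := S0.
  by rewrite f0 /finv_fun !hpos ?expn_gt0 ?addn_gt0 ?htj ?muln_gt0 ?S0p // ?addr0 ?mul0r ?addr0.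
have [c1|c1] := eqVneq (c ^+ S) 1.
  have fc : f_fun n i j c = c ^+ (2 ^ i).
    by rewrite /f_fun (e_one ch) // mulr1 -addrA (addrr_pchar2 ch) addr0.
  have y1 : (c ^+ (2 ^ i)) ^+ S = 1 by rewrite -exprM mulnC exprM c1 expr1n.
  rewrite fc /finv_fun (e_one ch) // mulr1 exprD mulnC exprM y1 expr1n mulr1.
  rewrite -addrA (addrr_pchar2 ch) addr0 -exprM.
  by rewrite -(expr_mod _ c1) hti_inv (expr_mod _ c1) expr1.
have c3 := hx c c0.
have w3 : (c ^+ S) ^+ 3 = 1 by rewrite -exprM mulnC.
have fc : f_fun n i j c = c ^+ (2 ^ j).
  by rewrite /f_fun (e_zero _ _ c3 c1) mulr0 add0r.
have y3 : (c ^+ (2 ^ j)) ^+ (3 * S) = 1 by rewrite -exprM mulnC exprM c3 expr1n.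
have y1 : (c ^+ (2 ^ j)) ^+ S != 1 by rewrite -exprM mulnC exprM w_pow.
rewrite fc /finv_fun (e_zero _ _ y3 y1) mulr0 add0r -exprM /u_of.
have [t ht] := arith S j tj S0 htj htj_inv.
by rewrite -/S ht exprD expr1 mulnC exprM c3 expr1n mulr1.
Qed.
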